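(* Let $H$ be a finite dimensional $G$-graded $G$-module. For all $b\in B_n$, $x\in(H^\ast)^{\otimes n}$ and $v\in H^{\otimes n}$, $(b\cdot x)(v)=x(r(b)\cdot v)$.
   Context: $G$ finite group. A $G$-graded $G$-module is $H=\bigoplus_{m\in G}H_m$ with a $G$-action satisfying $\gamma H_m=H_{\gamma m\gamma^{-1}}$. $H^\ast$ is a $G$-graded $G$-module via $(\gamma x)(v)=x(\gamma^{-1}v)$ and $(H^\ast)_m=(H_{m^{-1}})^\ast$. For any $G$-graded $G$-module $V$, $B_n$ (generators $b_1,\dots,b_{n-1}$) acts on $V^{\otimes n}$ by $b_i(v_1\otimes\cdots\otimes v_n)=v_1\otimes\cdots\otimes(\gamma_iv_{i+1})\otimes v_i\otimes\cdots\otimes v_n$ for $v_j\in V_{\gamma_j}$; this is applied to both $V=H$ and $V=H^\ast$. The pairing of $(H^\ast)^{\otimes n}$ with $H^{\otimes n}$ is $(x_1\otimes\cdots\otimes x_n)(v_1\otimes\cdots\otimes v_n)=x_n(v_1)x_{n-1}(v_2)\cdots x_1(v_n)$. The reflection $r:B_n\to B_n$ is the antihomomorphism with $r(b_i)=b_{n-i}$. *)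

(* Defs.v *)
From HB Require Import structures.
From mathcomp Require Import all_boot all_order all_algebra all_fingroup.
Set Implicit Arguments. Unset Strict Implicit. Unset Printing Implicit Defensive.
Import GRing.Theory.
Local Open Scope ring_scope.

(* Model:
   H = K^d with a homogeneous basis e_0..e_{d-1}; basis vector e_a has degree
   deg a.  The G-action is given by matrices M g in the column convention:
   g . e_j = \sum_i M g i j e_i.  On row vectors: g . v = v *m (M g)^T.
   H^{(x) n} is modelled by coordinates with respect to the basis
   e_{w 0} (x) ... (x) e_{w (n-1)}, w : {ffun 'I_n -> 'I_d}. *)

Notation tensor K d n := ({ffun {ffun 'I_n -> 'I_d} -> K}).

Section Braid.
Variables (K : fieldType) (gT : finGroupType) (d n : nat).


Definition graded_module (deg : 'I_d -> gT) (M : gT -> 'M[K]_d) : Prop :=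
  [/\ M 1%g = 1%:M,
      forall g h : gT, M (g * h)%g = M g *m M h
    & forall (g : gT) (i j : 'I_d), M g i j != 0 -> deg i = (g * deg j * g^-1)%g].

(* the dual H^*, with dual basis e^a of degree (deg a)^-1 and
   (g x)(v) = x(g^-1 v), written in the same model *)
Definition dual_deg (deg : 'I_d -> gT) : 'I_d -> gT := fun i => ((deg i)^-1)%g.
Definition dual_rep (M : gT -> 'M[K]_d) : gT -> 'M[K]_d := fun g => (M (g^-1)%g)^T.

Definition gactv (M : gT -> 'M[K]_d) (g : gT) (v : 'rV[K]_d) : 'rV[K]_d :=
  v *m (M g)^T.

Definition bvec (a : 'I_d) : 'rV[K]_d := delta_mx 0 a.

Definition ptensor (f : 'I_n -> 'rV[K]_d) : tensor K d n :=
  [ffun u : {ffun 'I_n -> 'I_d} => \prod_j f j 0 (u j)].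

(* generator index k : 'I_n.-1 stands for b_{k+1}, acting on (0-based)
   positions k and k+1 *)
Lemma pos0_subproof (k : 'I_n.-1) : (k < n)%N.
Proof. case: n k => [[]//|m] [k /= hk]. by apply: ltnW. Qed.
Lemma pos1_subproof (k : 'I_n.-1) : (k.+1 < n)%N.
Proof. case: n k => [[]//|m] [k /= hk]. by rewrite ltnS. Qed.
Definition pos0 (k : 'I_n.-1) : 'I_n := Ordinal (pos0_subproof k).
Definition pos1 (k : 'I_n.-1) : 'I_n := Ordinal (pos1_subproof k).

(* b (v_1 (x) .. (x) v_n) = v_1 (x) .. (x) (gamma_i v_{i+1}) (x) v_i (x) .. *)
Definition gen_on_basis (deg : 'I_d -> gT) (M : gT -> 'M[K]_d) (k : 'I_n.-1)
    (w : {ffun 'I_n -> 'I_d}) : tensor K d n :=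
  ptensor (fun p => if p == pos0 k then gactv M (deg (w (pos0 k))) (bvec (w (pos1 k)))
                    else if p == pos1 k then bvec (w (pos0 k))
                    else bvec (w p)).

(* b^-1 (v_1 (x) .. (x) v_n) = v_1 (x) .. (x) v_{i+1} (x) (gamma_{i+1}^-1 v_i) (x) .. *)
Definition geninv_on_basis (deg : 'I_d -> gT) (M : gT -> 'M[K]_d) (k : 'I_n.-1)
    (w : {ffun 'I_n -> 'I_d}) : tensor K d n :=
  ptensor (fun p => if p == pos0 k then bvec (w (pos1 k))
                    else if p == pos1 k then
                      gactv M ((deg (w (pos1 k)))^-1)%g (bvec (w (pos0 k)))
                    else bvec (w p)).

(* action of b_{k+1} (s = true) or b_{k+1}^-1 (s = false), extended linearly *)
Definition braid_gen_act (deg : 'I_d -> gT) (M : gT -> 'M[K]_d)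
    (s : bool) (k : 'I_n.-1) (t : tensor K d n) : tensor K d n :=
  [ffun u : {ffun 'I_n -> 'I_d} => \sum_(w : {ffun 'I_n -> 'I_d})
     t w * (if s then gen_on_basis deg M k w else geninv_on_basis deg M k w) u].

(* elements of B_n, as words in the generators and their inverses:
   [:: g1; ...; gm] stands for g1 g2 ... gm *)
Definition braid_word := seq (bool * 'I_n.-1).

Definition braid_act (deg : 'I_d -> gT) (M : gT -> 'M[K]_d)
    (b : braid_word) (t : tensor K d n) : tensor K d n :=
  foldr (fun g t => braid_gen_act deg M g.1 g.2 t) t b.

(* r : antihomomorphism with r(b_i) = b_{n-i} *)
Definition braid_refl (b : braid_word) : braid_word :=
  rev (map (fun g => (g.1, rev_ord g.2)) b).

(* pairing (x_1 (x) .. (x) x_n)(v_1 (x) .. (x) v_n) = x_n(v_1) ... x_1(v_n),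
   extended bilinearly (dual bases) *)
Definition pairing (x v : tensor K d n) : K :=
  \sum_(w : {ffun 'I_n -> 'I_d}) x w * v [ffun j => w (rev_ord j)].

End Braid.

(* Main.v *)
Require Import Defs.
From HB Require Import structures.
From mathcomp Require Import all_boot all_order all_algebra all_fingroup.
From mathcomp Require Import zify.
Set Implicit Arguments. Unset Strict Implicit. Unset Printing Implicit Defensive.
Import GRing.Theory.
Local Open Scope ring_scope.

Section Aux.
Variables (K : fieldType) (gT : finGroupType) (d n : nat).
Variables (deg : 'I_d -> gT) (M : gT -> 'M[K]_d).

Definition revf (u : {ffun 'I_n -> 'I_d}) : {ffun 'I_n -> 'I_d} :=
  [ffun j => u (rev_ord j)].

Lemma revfK : involutive revf.
Proof. by move=> u; apply/ffunP=> j; rewrite !ffunE rev_ordK. Qed.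

Lemma pos0_rev (k : 'I_n.-1) : pos0 (rev_ord k) = rev_ord (pos1 k).
Proof. apply: val_inj => /=. have := ltn_ord k. lia. Qed.
Lemma pos1_rev (k : 'I_n.-1) : pos1 (rev_ord k) = rev_ord (pos0 k).
Proof. apply: val_inj => /=. have := ltn_ord k. lia. Qed.

Lemma pos01_neq (k : 'I_n.-1) : pos0 k != pos1 k.
Proof. by apply/eqP => /(congr1 val) /= /n_Sn. Qed.

Lemma prod2 (R : comRingType) (a b : 'I_n) (f : 'I_n -> R) : a != b ->
  \prod_j f j = f a * f b * \prod_(j | (j != a) && (j != b)) f j.
Proof.
move=> ab; rewrite (bigD1 a) //= (bigD1 b) 1?eq_sym //= mulrA.
by congr (_ * _); apply: eq_bigl => j; rewrite andbC.
Qed.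

Lemma bvecE (a c : 'I_d) : bvec K a 0 c = (a == c)%:R :> K.
Proof. by rewrite /bvec mxE eq_sym. Qed.

Lemma gactvE (N : gT -> 'M[K]_d) g a c : gactv N g (bvec K a) 0 c = N g c a.
Proof.
rewrite /gactv /bvec mxE (bigD1 a) //= big1 ?addr0.
  by rewrite !mxE !eqxx mul1r.
by move=> i /negbTE ia; rewrite !mxE ia andbF mul0r.
Qed.

Lemma gen_swap s k w z :
  (if s then gen_on_basis (dual_deg deg) (dual_rep M) k w
   else geninv_on_basis (dual_deg deg) (dual_rep M) k w) (revf z) =
  (if s then gen_on_basis deg M (rev_ord k) z
   else geninv_on_basis deg M (rev_ord k) z) (revf w).
Proof.
have nab := pos01_neq k.
have nab' := pos01_neq (rev_ord k).
case: s; rewrite /gen_on_basis /geninv_on_basis /ptensor !ffunE.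
- rewrite [in RHS](reindex_inj rev_ord_inj) /= (prod2 _ nab) (prod2 _ nab).
  have nba : (pos1 k == pos0 k) = false by rewrite eq_sym (negbTE nab).
  have nba' : (pos1 (rev_ord k) == pos0 (rev_ord k)) = false
    by rewrite eq_sym (negbTE nab').
  rewrite -pos1_rev -pos0_rev !eqxx nba nba' ?(negbTE nab) ?(negbTE nab').
  congr (_ * _); last first.
    apply: eq_bigr => j /andP[ja jb].
    have r0 : (rev_ord j == pos0 (rev_ord k)) = false
      by rewrite pos0_rev (inj_eq rev_ord_inj) (negbTE jb).
    have r1 : (rev_ord j == pos1 (rev_ord k)) = false
      by rewrite pos1_rev (inj_eq rev_ord_inj) (negbTE ja).
    rewrite (negbTE ja) (negbTE jb) r0 r1.
    by rewrite !bvecE !ffunE rev_ordK eq_sym.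
  rewrite !gactvE !bvecE !ffunE /dual_rep /dual_deg ?invgK mxE.
  rewrite pos1_rev pos0_rev !rev_ordK.
  rewrite [(z _ == _)]eq_sym; case: eqP => [->|_];
    by rewrite ?mulr0 ?mul0r ?mulr1 ?mul1r.
- rewrite [in RHS](reindex_inj rev_ord_inj) /= (prod2 _ nab) (prod2 _ nab).
  have nba : (pos1 k == pos0 k) = false by rewrite eq_sym (negbTE nab).
  have nba' : (pos1 (rev_ord k) == pos0 (rev_ord k)) = false
    by rewrite eq_sym (negbTE nab').
  rewrite -pos1_rev -pos0_rev !eqxx nba nba' ?(negbTE nab) ?(negbTE nab').
  congr (_ * _); last first.
    apply: eq_bigr => j /andP[ja jb].
    have r0 : (rev_ord j == pos0 (rev_ord k)) = false
      by rewrite pos0_rev (inj_eq rev_ord_inj) (negbTE jb).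
    have r1 : (rev_ord j == pos1 (rev_ord k)) = false
      by rewrite pos1_rev (inj_eq rev_ord_inj) (negbTE ja).
    rewrite (negbTE ja) (negbTE jb) r0 r1.
    by rewrite !bvecE !ffunE rev_ordK eq_sym.
  rewrite !gactvE !bvecE !ffunE /dual_rep /dual_deg ?invgK mxE.
  rewrite pos1_rev pos0_rev !rev_ordK.
  rewrite [(z _ == _)]eq_sym; case: eqP => [->|_];
    by rewrite ?mulr0 ?mul0r ?mulr1 ?mul1r.
Qed.

Lemma step s k (x v : tensor K d n) :
  pairing (braid_gen_act (dual_deg deg) (dual_rep M) s k x) v =
  pairing x (braid_gen_act deg M s (rev_ord k) v).
Proof.
rewrite /pairing /braid_gen_act.
under eq_bigr => u _ do rewrite ffunE -/(revf u) mulr_suml.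
rewrite exchange_big /=; apply: eq_bigr => w _.
rewrite ffunE -/(revf w) mulr_sumr.
rewrite (reindex_inj (can_inj revfK)) /=.
apply: eq_bigr => z _; rewrite revfK gen_swap.
by rewrite -mulrA [v z * _]mulrC.
Qed.

End Aux.

Theorem proposition2p37 (K : fieldType) (gT : finGroupType) (d n : nat)
    (deg : 'I_d -> gT) (M : gT -> 'M[K]_d) :
  graded_module deg M ->
  forall (b : braid_word n) (x v : tensor K d n),
    pairing (braid_act (dual_deg deg) (dual_rep M) b x) v =
    pairing x (braid_act deg M (braid_refl b) v).
Proof.
move=> _; elim=> [|[s k] b IH] x v //=.
rewrite step IH /braid_refl /= rev_cons -cats1 /braid_act foldr_cat /=.
by [].
Qed.
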